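(* Let $n$ be odd and squarefree, let $p'$ be a prime divisor of $n$, and let $A=L(n;p')$. Let $S=(x_1,\ldots,x_l)$ be a sequence in $\mathbb{Z}_n$ such that for every prime divisor $p$ of $n$, at least two terms of $S$ are coprime to $p$. Let $n'=n/p'$ and let $S'$ be the image of $S$ under the natural map $\mathbb{Z}_n\to\mathbb{Z}_{n'}$. Suppose at most one term of $S'$ is a unit. Then $S$ is an $A$-weighted zero-sum sequence.
   Context: $\mathbb{Z}_m$ is the integers mod $m$, $U(m)$ its unit group. For $A\subseteq\mathbb{Z}_n$, a sequence $(x_1,\ldots,x_l)$ is an $A$-weighted zero-sum sequence if there exist $a_1,\ldots,a_l\in A$ with $\sum a_ix_i=0$. For odd $m=\prod p_i^{r_i}$, prime $p\mid m$ and $a\in U(m)$, $\left(\frac{a}{p}\right)$ is the Legendre symbol of the image mod $p$ and $\left(\frac{a}{m}\right)=\prod\left(\frac{a}{p_i}\right)^{r_i}$; $L(m;p')=\{a\in U(m):\left(\frac{a}{m}\right)=\left(\frac{a}{p'}\right)\}$ for a prime $p'\mid m$. *)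

(* Defs.v *)
From mathcomp Require Import all_boot all_order all_algebra.
Set Implicit Arguments. Unset Strict Implicit. Unset Printing Implicit Defensive.
Import GRing.Theory.
Local Open Scope ring_scope.

(* Elements of Z_m are represented by natural numbers (residues). *)

Definition squarefree (n : nat) : Prop :=
  forall p : nat, prime p -> ~~ (p * p %| n)%N.

Definition legendre (p a : nat) : int :=
  if (p %| a)%N then 0
  else if [exists x : 'I_p, (x * x) %% p == a %% p]%N then 1 else -1.

Definition jacobi (m a : nat) : int :=
  \prod_(p <- primes m) legendre p a ^+ logn p m.

Definition Lset (m p' : nat) : pred nat :=
  fun a => [&& (a < m)%N, coprime a m & jacobi m a == legendre p' a].

Definition weighted_zero_sum (n : nat) (A : pred nat) (S : seq nat) : Prop :=
  exists w : seq nat, [/\ size w = size S, all A w &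
    (\sum_(i < size S) nth 0 w i * nth 0 S i == 0 %[mod n])%N].

(* Main.v *)
Require Import Defs.
From mathcomp Require Import all_boot all_order all_algebra.
From mathcomp Require Import zify.

Lemma modinv q x : forall t, prime q -> ~~ (q %| x) -> exists c, c * x = t %[mod q].
Proof.
move=> t pq nqx.
have q0 : 0 < q by apply: prime_gt0.
have cop : gcdn q x = 1 by apply/eqP; rewrite -/(coprime q x) prime_coprime.
case: (Bezoutl x q0) => a _; rewrite cop => /dvdnP [k hk].
exists ((q.-1) * a * t).
have e : (q.-1 * a * t) * x + q * t = (k * q.-1 * t) * q + t.
  have : q = q.-1.+1 by rewrite prednK.
  move: (q.-1) => r eq; rewrite [X in _ + X * t]eq.
  have -> : r * a * t * x + r.+1 * t = r * t * (1 + a * x) + t by nia.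
  rewrite hk; nia.
have h1 : (q.-1 * a * t * x + q * t) %% q = (q.-1 * a * t * x) %% q by rewrite addnC mulnC modnMDl.
by rewrite -h1 e modnMDl.
Qed.

Definition wsum (cs xs : seq nat) := \sum_(i < size xs) nth 0 cs i * nth 0 xs i.

Lemma wsum_cons c cs x xs : wsum (c :: cs) (x :: xs) = c * x + wsum cs xs.
Proof. by rewrite /wsum /= big_ord_recl. Qed.

Lemma wsum0 q cs xs : count (fun x => ~~ (q %| x)) xs = 0 -> q %| wsum cs xs.
Proof.
move=> /eqP; rewrite -leqn0 leqNgt -has_count => /hasPn h.
apply: dvdn_sum => i _; apply: dvdn_mull.
have := h (nth 0 xs i) (mem_nth 0 (ltn_ord i)); by rewrite negbK.
Qed.

Lemma reach q xs : prime q -> 2 < q -> forall t,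
  (0 < count (fun x => ~~ (q %| x)) xs) && ~~ (q %| t) ||
  (1 < count (fun x => ~~ (q %| x)) xs) ->
  exists cs, [/\ size cs = size xs, all (fun c => ~~ (q %| c)) cs &
                 wsum cs xs = t %[mod q]].
Proof.
move=> pq q2; elim: xs => [|x xs IH] t /=.
  by [].
have q0 : 0 < q by apply: prime_gt0.
have nq1 : ~~ (q %| 1) by rewrite dvdn1 gtn_eqF // ltnW.
have nq2 : ~~ (q %| 2) by apply/negP => /dvdn_leq; move: q2; clear; lia.
case: (boolP (q %| x)) => qx /= h.
  have [cs [s1 s2 s3]] := IH t h.
  exists (1 :: cs); split; rewrite /= ?s1 ?nq1 ?s2 // wsum_cons mul1n.
  by rewrite -modnDml (eqP qx) add0n.
case: (posnP (count (fun x => ~~ (q %| x)) xs)) => cxs.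
  move: h; rewrite cxs /= orbF => nqt.
  have [c hc] := @modinv q x t pq qx.
  have nqc : ~~ (q %| c).
    apply/negP => qc; move: nqt; rewrite /dvdn -hc.
    by rewrite -modnMml (eqP qc) mul0n mod0n.
  exists (c :: nseq (size xs) 1); split; rewrite /= ?size_nseq //.
    by rewrite nqc /=; apply/allP => y /nseqP [-> _].
  rewrite wsum_cons -modnDmr (eqP (wsum0 _ _ _ cxs)) addn0 //.
pose tt c := t + c * x * q.-1.
have [c [hc1 hc2]] : exists c, ~~ (q %| c) /\ ~~ (q %| tt c).
  case: (boolP (q %| tt 1)) => h1; last by exists 1.
  case: (boolP (q %| tt 2)) => h2; last by exists 2.
  have := dvdn_sub h2 h1.
  have -> : tt 2 - tt 1 = x * q.-1 by rewrite /tt -!mulnA; move: (x * q.-1) => y; lia.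
  rewrite Euclid_dvdM // (negbTE qx) /=.
  move=> /dvdn_leq; move: q2; clear; lia.
have [cs [s1 s2 s3]] := IH (tt c) (introT orP (or_introl (introT andP (conj cxs hc2)))).
exists (c :: cs); split; rewrite /= ?s1 ?hc1 ?s2 // wsum_cons.
rewrite -modnDmr s3 modnDmr /tt.
have -> : c * x + (t + c * x * q.-1) = t + (c * x) * q.
  have : q = q.-1.+1 by rewrite prednK.
  move: (q.-1) => r ->; nia.
by rewrite addnC modnMDl.
Qed.

Lemma legendre_mod q a b : a = b %[mod q] -> legendre q a = legendre q b.
Proof. by move=> h; rewrite /legendre /dvdn h. Qed.

Lemma legendre_sq q c : prime q -> ~~ (q %| c) -> legendre q (c * c) = 1%R.
Proof.
move=> pq nc; rewrite /legendre Euclid_dvdM // orbb (negbTE nc).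
have q0 : 0 < q by apply: prime_gt0.
case: ifP => // /existsP []; exists (Ordinal (ltn_pmod c q0)) => /=.
by rewrite modnMml modnMmr.
Qed.

Lemma legendre_pm q a : ~~ (q %| a) -> legendre q a = 1%R \/ legendre q a = (-1)%R.
Proof. by move=> h; rewrite /legendre (negbTE h); case: ifP; [left|right]. Qed.

Lemma nonres q : prime q -> 2 < q -> exists nu, ~~ (q %| nu) /\ legendre q nu = (-1)%R.
Proof.
move=> pq q2.
have q0 : 0 < q by apply: prime_gt0.
case: (boolP [exists y : 'I_q, (0 < y) && (legendre q y == (-1)%R)]).
  case/existsP => y /andP [y0 /eqP hy]; exists y; split => //.
  by apply/negP => /(dvdn_leq y0); rewrite leqNgt ltn_ord.
rewrite negb_exists => /forallP H.
pose f (x : 'I_q) : 'I_q := Ordinal (ltn_pmod (x * x) q0).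
have sub : [set: 'I_q] \subset codom f.
  apply/subsetP => y _.
  case: (posnP y) => y0.
    have z0 : 0 < q := q0.
    apply/codomP; exists (Ordinal z0); apply: val_inj => /=.
    by rewrite y0 mod0n.
  have := H y; rewrite y0 /= /legendre.
  have -> : (q %| y) = false by apply/negP => /(dvdn_leq y0); rewrite leqNgt ltn_ord.
  case: ifP => // /existsP [x /eqP hx] _.
  apply/codomP; exists x; apply: val_inj => /=.
  by rewrite hx modn_small.
have : #|codom f| == #|'I_q|.
  by rewrite eqn_leq leq_image_card /= -cardsT subset_leq_card.
move=> /image_injP inj.
have q1 : 1 < q by apply: prime_gt1.
have qm : q.-1 < q by rewrite prednK // ltnSn.
have e : f (Ordinal q1) = f (Ordinal qm).
  apply: val_inj => /=.
  have : q = q.-2.+2 by move: q2; clear; lia.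
  move: (q.-2) => s ->.
  have -> : (s.+2).-1 * (s.+2).-1 = s * s.+2 + 1 by clear; simpl; nia.
  by rewrite mul1n modnMDl.
have := inj _ _ isT isT e.
move=> /(congr1 val) /=; move: q2; clear; lia.
Qed.

Lemma zs_des q xs k : prime q -> 2 < q -> 1 < count (fun x => ~~ (q %| x)) xs ->
  exists cs, [/\ size cs = size xs, all (fun c => ~~ (q %| c)) cs, q %| wsum cs xs &
   (k < size xs -> legendre q (nth 0 cs k) = 1%R)].
Proof.
move=> pq q2 cnt.
have [cs0 [s1 s2 s3]] := @reach q xs pq q2 0 (introT orP (or_intror cnt)).
pose lam := nth 1 cs0 k.
have nql : ~~ (q %| lam).
  rewrite /lam; case: (ltnP k (size cs0)) => hk.
    by apply: (allP s2); apply: mem_nth.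
  by rewrite nth_default // dvdn1 gtn_eqF // prime_gt1.
exists (map (fun c => c * lam) cs0); split.
- by rewrite size_map.
- apply/allP => c /mapP [c0 /(allP s2) h ->].
  by rewrite Euclid_dvdM // negb_or h nql.
- have -> : wsum [seq c * lam | c <- cs0] xs = lam * wsum cs0 xs.
    rewrite /wsum big_distrr /=; apply: eq_bigr => i _.
    rewrite (nth_map 0) ?s1 ?ltn_ord //; by rewrite mulnAC mulnC.
  by apply: dvdn_mull; rewrite /dvdn s3 mod0n.
- move=> hk; rewrite (nth_map 0) ?s1 // /lam (set_nth_default 0) ?s1 //.
  apply: legendre_sq => //; by apply: (allP s2); apply: mem_nth; rewrite s1.
Qed.

Lemma crt (ps : seq nat) (f : nat -> nat) : uniq ps -> all prime ps ->
  exists a, forall q, q \in ps -> a = f q %[mod q].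
Proof.
elim: ps => [|p ps IH] /=; first by exists 0.
case/andP => pn up /andP [pp aps].
have [a' ha'] := IH up aps.
pose M := \prod_(q <- ps) q.
have cop : coprime p M.
  rewrite prime_coprime // /M Euclid_dvd_prod //.
  rewrite big_seq big1_idem //= => q qps.
  have pq : prime q by apply: (allP aps).
  rewrite dvdn_prime2 //; apply/negbTE/eqP => eqpq.
  by move: pn; rewrite eqpq qps.
exists (chinese p M (f p) a') => q; rewrite in_cons => /orP [/eqP -> | qps].
  by rewrite chinese_modl.
have qM : q %| M by rewrite /M (bigD1_seq q) //= dvdn_mulr.
rewrite -(modn_dvdm _ qM) chinese_modr // modn_dvdm //.
exact: ha'.
Qed.

Lemma sqfree_dvd n m : squarefree n -> 0 < n ->
  (forall q, q \in primes n -> q %| m) -> n %| m.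
Proof.
move=> sq n0 h; apply/(dvdn_partP _ n0) => p; rewrite mem_primes => /andP [pp /andP [_ pn]].
have pin : p \in primes n by rewrite mem_primes pp n0 pn.
have -> : n`_p = p.
  rewrite p_part.
  have l1 : 0 < logn p n by rewrite logn_gt0.
  have l2 : logn p n <= 1.
    rewrite leqNgt; apply/negP => l2.

    move: l2; rewrite -(pfactor_dvdn 2 pp n0) => l2.
    by rewrite (negbTE (sq p pp)) in l2.
  have -> : logn p n = 1 by apply/eqP; rewrite eqn_leq l2 l1.
  by rewrite expn1.
by apply: h.
Qed.

Lemma count2 (s : seq nat) (a : pred nat) i j : i < j -> j < size s ->
  a (nth 0 s i) -> a (nth 0 s j) -> 1 < count a s.
Proof.
move=> ij js ai aj.
rewrite -(cat_take_drop j s) count_cat (drop_nth 0 js) /= aj.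
have : 0 < count a (take j s).
  rewrite -has_count; apply/hasP; exists (nth 0 s i) => //.
  rewrite -(nth_take 0 ij); apply: mem_nth; rewrite size_take js //.
clear; lia.
Qed.

Lemma logn1 n q : squarefree n -> 0 < n -> q \in primes n -> logn q n = 1.
Proof.
move=> sq n0 qn; have pq : prime q by move: qn; rewrite mem_primes => /andP [].
have l1 : 0 < logn q n by rewrite logn_gt0.
have l2 : logn q n <= 1.
  rewrite leqNgt; apply/negP => l2.
  move: l2; rewrite -(pfactor_dvdn 2 pq n0) => l2.
  by rewrite (negbTE (sq q pq)) in l2.
by apply/eqP; rewrite eqn_leq l2 l1.
Qed.

Theorem lemma3p6 (n p' : nat) (S : seq nat) :
  odd n -> squarefree n ->
  prime p' -> (p' %| n)%N ->
  all (fun x => x < n)%N S ->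
  (forall p, prime p -> (p %| n)%N -> (2 <= count (fun x => coprime x p) S)%N) ->
  (count (fun x => coprime (x %% (n %/ p')) (n %/ p')) S <= 1)%N ->
  weighted_zero_sum n (Lset n p') S.
Proof.
move=> hodd hsq pp' p'n hlt hcnt hunit.
have n0 : 0 < n by case: n hodd {hsq p'n hlt hcnt hunit}.
set n' := n %/ p' in hunit.
have hn : n = n' * p' by rewrite divnK.
have n'0 : 0 < n' by move: n0; rewrite hn muln_gt0 => /andP [].
have p'n' : ~~ (p' %| n').
  apply/negP => h; have := hsq p' pp'; rewrite hn.
  by rewrite dvdn_pmul2r ?prime_gt0 // h.
have pr_n q : q \in primes n -> [/\ prime q, q %| n & 2 < q].
  rewrite mem_primes n0 /= => /andP [pq qn]; split => //.
  rewrite ltn_neqAle prime_gt1 // andbT; apply/eqP => q2.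
  by move: qn; rewrite -q2 dvdn2 hodd.
pose P x := coprime (x %% n') n'.
pose k := find P S.
pose Pcs q cs := (q \in primes n) ==> [&& size cs == size S,
   all (fun c => ~~ (q %| c)) cs, q %| wsum cs S &
   (k < size S) ==> (legendre q (nth 0 cs k) == 1%R)].
have exCS q : exists cs, Pcs q cs.
  case: (boolP (q \in primes n)) => qn; last by exists [::]; rewrite /Pcs (negbTE qn).
  have [pq qn' q2] := pr_n q qn.
  have cnt : 1 < count (fun x => ~~ (q %| x)) S.
    have := hcnt q pq qn'.
    rewrite (@eq_count _ _ (fun x => ~~ (q %| x))) // => x.
    by rewrite coprime_sym prime_coprime.
  have [cs [c1 c2 c3 c4]] := @zs_des q S k pq q2 cnt.
  exists cs; rewrite /Pcs qn c1 eqxx c2 c3 /=; apply/implyP => /c4 ->; by [].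
pose CS q := xchoose (exCS q).
have hCS q : q \in primes n -> [/\ size (CS q) = size S,
   all (fun c => ~~ (q %| c)) (CS q), q %| wsum (CS q) S &
   (k < size S -> legendre q (nth 0 (CS q) k) = 1%R)].
  move=> qn; have := xchooseP (exCS q); rewrite -/(CS q) /Pcs qn /=.
  case/and4P => /eqP c1 c2 c3 /implyP c4; split => // /c4 /eqP; by [].
have exNU q : exists nu, (q \in primes n) ==> ~~ (q %| nu) && (legendre q nu == (-1)%R).
  case: (boolP (q \in primes n)) => qn; last by exists 0.
  have [pq _ q2] := pr_n q qn.
  have [nu [h1 h2]] := @nonres q pq q2; exists nu; by rewrite h1 h2 eqxx.
pose NU q := xchoose (exNU q).
have hNU q : q \in primes n -> ~~ (q %| NU q) /\ legendre q (NU q) = (-1)%R.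
  move=> qn; have := xchooseP (exNU q); rewrite -/(NU q) qn /=.
  by case/andP => -> /eqP.
pose qi i := pdiv (gcdn (nth 0 S i) n').
have hqi i : i < size S -> i != k ->
   [/\ qi i \in primes n, qi i != p' & qi i %| nth 0 S i].
  move=> iS ik.
  have nP : ~~ P (nth 0 S i).
    apply/negP => Pi.
    have hP : has P S by apply/hasP; exists (nth 0 S i) => //; apply: mem_nth.
    have kS : k < size S by rewrite -has_find.
    have ki : k < i.
      rewrite ltn_neqAle eq_sym ik /=; rewrite leqNgt; apply/negP => /(before_find 0).
      by rewrite Pi.
    have := @count2 S P k i ki iS (nth_find 0 hP) Pi.
    by rewrite ltnNge hunit.
  have g1 : 1 < gcdn (nth 0 S i) n'.
    rewrite ltn_neqAle gcdn_gt0 n'0 orbT andbT eq_sym.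
    by move: nP; rewrite /P coprime_modl.
  have pq := pdiv_prime g1.
  have d1 : qi i %| gcdn (nth 0 S i) n' := pdiv_dvd _.
  have dx : qi i %| nth 0 S i by apply: dvdn_trans d1 (dvdn_gcdl _ _).
  have dn' : qi i %| n' by apply: dvdn_trans d1 (dvdn_gcdr _ _).
  split => //.
    by rewrite mem_primes pq n0 hn dvdn_mulr.
  by apply/eqP => e; move: p'n'; rewrite -e dn'.
pose sg i := (\prod_(q <- primes n | (q != p') && (q != qi i)) legendre q (nth 0 (CS q) i))%R.
pose F i q := if (i != k) && (q == qi i) then (if sg i == 1%R then 1 else NU q) else nth 0 (CS q) i.
have hF i q : i < size S -> q \in primes n -> ~~ (q %| F i q).
  move=> iS qn; have [pq _ _] := pr_n q qn; rewrite /F.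
  case: ifP => _; last by have [c1 c2 _ _] := hCS q qn; apply: (allP c2); apply: mem_nth; rewrite c1.
  case: ifP => _; last by case: (hNU q qn).
  by rewrite dvdn1 gtn_eqF // prime_gt1.
have exW i : exists a, (a < n) && all (fun q => a %% q == F i q %% q) (primes n).
  have [a ha] := @crt (primes n) (F i) (primes_uniq n) (introT allP (fun q qn => let: And3 h _ _ := pr_n q qn in h)).
  exists (a %% n); rewrite ltn_pmod //=; apply/allP => q qn.
  have [_ qd _] := pr_n q qn.
  by rewrite modn_dvdm // ha.
pose W i := xchoose (exW i).
have hW i : W i < n /\ forall q, q \in primes n -> W i = F i q %[mod q].
  have := xchooseP (exW i); rewrite -/(W i) => /andP [h1 /allP h2].
  by split => // q /h2 /eqP.
have pmS : forall i, i < size S -> sg i = 1%R \/ sg i = (-1)%R.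
  move=> i iS; rewrite /sg big_seq_cond.
  apply: (big_ind (fun x : int => (x = 1 \/ x = -1)%R)); first by left.
    by move=> x y [] -> [] ->; rewrite ?mulr1 ?mul1r ?mulrNN; [left|right|right|left].
  move=> q /andP [qn _]; apply: legendre_pm.
  have [c1 c2 _ _] := hCS q qn; apply: (allP c2); apply: mem_nth; by rewrite c1.
have p'n_ : p' \in primes n by rewrite mem_primes pp' n0 p'n.
have hWd i q : q \in primes n -> (q %| W i) = (q %| F i q).
  by move=> qn; rewrite /dvdn (hW i).2.
have jac a : jacobi n a = (\prod_(q <- primes n) legendre q a)%R.
  rewrite /jacobi big_seq [RHS]big_seq; apply: eq_bigr => q qn.
  by rewrite (@logn1 n q hsq n0 qn) GRing.expr1.
exists (mkseq W (size S)); split.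
- by rewrite size_mkseq.
- apply/allP => a /mapP [i]; rewrite mem_iota add0n => /andP [_ iS] ->.
  apply/and3P; split; first by case: (hW i).
    have W0 : 0 < W i.
      rewrite lt0n; apply/negP => /eqP W0.
      have := hF i p' iS p'n_; by rewrite -hWd // W0 dvdn0.
    rewrite coprime_has_primes //; apply/hasPn => q qn; rewrite mem_primes.
    by rewrite hWd // (negbTE (hF i q iS qn)) !andbF.
  rewrite jac (bigD1_seq p') ?primes_uniq //.
  suff -> : (\prod_(q <- primes n | q != p') legendre q (W i))%R = 1%R by rewrite Monoid.mulm1.
  have -> : (\prod_(q <- primes n | q != p') legendre q (W i) = 
             \prod_(q <- primes n | q != p') legendre q (F i q))%R.
    rewrite big_seq_cond [RHS]big_seq_cond; apply: eq_bigr => q /andP [qn _].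
    by apply: legendre_mod; exact: (hW i).2.
  case: (eqVneq i k) => ik.
    rewrite big_seq_cond big1 // => q /andP [qn _]; rewrite /F ik eqxx /=.
    by have [_ _ _ c4] := hCS q qn; apply: c4; rewrite -ik.
  have [qn qp' qx] := hqi i iS ik.
  rewrite -big_filter (bigD1_seq (qi i)) ?filter_uniq ?primes_uniq // ?mem_filter ?qp' ?qn //.
  rewrite big_filter_cond.
  have -> : (\prod_(q <- primes n | (q != p') && (q != qi i)) legendre q (F i q))%R = sg i.
    by apply: eq_bigr => q /andP [_ /negbTE qq]; rewrite /F qq andbF.
  rewrite /F ik eqxx /=.
  case: (pmS i iS) => ->.
    by rewrite eqxx (@legendre_sq (qi i) 1) ?GRing.mulr1 // ?dvdn1; have [pq _ _] := pr_n _ qn; rewrite ?gtn_eqF ?prime_gt1.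
  have [_ h] := hNU (qi i) qn.
  by rewrite /= h.
- rewrite mod0n -/(dvdn n _); apply: (@sqfree_dvd n _ hsq n0) => q qn.
  rewrite /dvdn -modn_summ.
  have -> : \sum_(i < size S) (nth 0 (mkseq W (size S)) i * nth 0 S i) %% q =
            \sum_(i < size S) (nth 0 (CS q) i * nth 0 S i) %% q.
    apply: eq_bigr => i _; rewrite nth_mkseq // -modnMml (hW i).2 // modnMml.
    rewrite /F; case: ifP => // /andP [ik /eqP qe].
    have [_ _ qx] := hqi i (ltn_ord i) ik.
    move: (if _ then _ else _) => c.
    rewrite qe; move: (dvdn_mull c qx) (dvdn_mull (nth 0 (CS (qi i)) i) qx).
    by rewrite /dvdn => /eqP -> /eqP ->.
  rewrite modn_summ; have [_ _ c3 _] := hCS q qn; exact: c3.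
Qed.
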